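(* Let $P$ be a distribution on an instance set $\mathcal{Z}$, let $h$ be a fixed model (hypothesis), and let $\ell$ be a nonnegative loss with $C=\sup_{z\in\mathcal{Z}}\ell(h,z)<\infty$. Let $S=\{z_1,\dots,z_n\}$ consist of $n$ i.i.d. samples from $P$, and let $\Gamma$ be a partition of $\mathcal{Z}$ into $K$ disjoint nonempty (measurable) sets $\mathcal{Z}_1,\dots,\mathcal{Z}_K$. For any constants $\gamma\ge 1$, $\delta>0$ and $\alpha\in\left[0,\frac{\gamma n(K+\gamma n)}{K(4n-3)}\right]$, with probability at least $1-\gamma^{-\alpha}-\delta$ (over the draw of $S$), $$F(P,h)\le F(S,h)+C\sqrt{\hat u\,\alpha\ln\gamma}+g(\delta/2),$$ where $$\hat u=\frac{\gamma}{2n}+\frac{\gamma^2}{2}\sum_{i=1}^K\Big(\frac{n_i}{n}\Big)^2+\gamma^2\sqrt{\frac{2}{n}\ln\frac{2K}{\delta}}.$$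
   Context: $F(P,h)=\mathbb{E}_{z\sim P}[\ell(h,z)]$ is the expected loss and $F(S,h)=\frac1n\sum_{z\in S}\ell(h,z)$ the empirical loss. For the partition $\mathcal{Z}=\bigcup_{i=1}^K\mathcal{Z}_i$: $S_i=S\cap\mathcal{Z}_i$, $n_i=|S_i|$ (so $n=\sum_i n_i$), and $T=\{i\in[K]: S\cap\mathcal{Z}_i\neq\emptyset\}$. For $\delta>0$, $g(\delta)=C(\sqrt2+1)\sqrt{\frac{|T|\ln(2K/\delta)}{n}}+\frac{2C|T|\ln(2K/\delta)}{n}$. *)

(* Defs.v *)
From HB Require Import structures.
From mathcomp Require Import all_boot all_order all_algebra.
From mathcomp Require Import all_classical all_reals all_analysis.
Set Implicit Arguments. Unset Strict Implicit. Unset Printing Implicit Defensive.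
Import Order.TTheory GRing.Theory Num.Theory.
Local Open Scope classical_set_scope.
Local Open Scope ring_scope.

Section Defs.
Context {R : realType} {d : measure_display} {T : measurableType d}.

Definition cell_count (n K : nat) (Zs : 'I_K -> set T) (z : 'I_n -> T)
  (i : 'I_K) : nat := #|[set j : 'I_n | z j \in Zs i]|.

Definition num_hit (n K : nat) (Zs : 'I_K -> set T) (z : 'I_n -> T) : nat :=
  #|[set i : 'I_K | (0 < cell_count Zs z i)%N]|.

Definition emp_loss (n : nat) (loss : T -> R) (z : 'I_n -> T) : R :=
  n%:R^-1 * \sum_(j < n) loss (z j).

Definition gfun (C : R) (n K t : nat) (delta : R) : R :=
  C * (Num.sqrt 2 + 1) * Num.sqrt (t%:R * ln (2 * K%:R / delta) / n%:R)
  + 2 * C * t%:R * ln (2 * K%:R / delta) / n%:R.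

Definition uhat (gamma delta : R) (n K : nat) (Zs : 'I_K -> set T)
  (z : 'I_n -> T) : R :=
  gamma / (2 * n%:R)
  + gamma ^+ 2 / 2 * \sum_(i < K) ((cell_count Zs z i)%:R / n%:R) ^+ 2
  + gamma ^+ 2 * Num.sqrt (2 / n%:R * ln (2 * K%:R / delta)).

End Defs.

(* Main.v *)
Require Import Defs.
From HB Require Import structures.
From mathcomp Require Import all_boot all_order all_algebra.
From mathcomp Require Import all_classical all_reals all_analysis.
From mathcomp Require Import ring lra.
Import Order.TTheory GRing.Theory Num.Theory.
Local Open Scope ring_scope.

Section Elem.
Variable R : realType.

Lemma exp_quad (x : R) : x <= 1 -> expR x <= 1 + x + 2 * x ^+ 2.
Proof.
move=> x1.
have h1 : 1 - x / 2 <= expR (- (x / 2)).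
  by have := expR_ge1Dx (- (x / 2)); rewrite -[_ + - _]/(1 - x / 2).
have y0 : 0 < expR (x / 2) := expR_gt0 _.
have hx : expR x = expR (x / 2) ^+ 2.
  by rewrite expr2 -expRD; congr expR; field.
rewrite expRN in h1.
have hy : expR (x / 2) * (1 - x / 2) <= 1.
  by rewrite [X in X <= _]mulrC -ler_pdivlMr // div1r.
rewrite hx; set y := expR (x / 2) in y0 hy *.
have c0 : 0 < 1 - x / 2 by lra.
have key : 1 <= (1 + x + 2 * x ^+ 2) * (1 - x / 2) ^+ 2.
  have h5 : 0 <= (1 - x) * (5 - 2 * x) by apply: mulr_ge0; lra.
  have h6 : 0 <= x ^+ 2 * ((1 - x) * (5 - 2 * x)) by apply: mulr_ge0 => //; exact: sqr_ge0.
  have -> : (1 + x + 2 * x ^+ 2) * (1 - x / 2) ^+ 2 = 1 + x ^+ 2 * ((1 - x) * (5 - 2 * x)) / 4 by field.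
  have : 0 <= x ^+ 2 * ((1 - x) * (5 - 2 * x)) / 4 by apply: divr_ge0.
  lra.
have yc0 : 0 <= y * (1 - x / 2) by apply: mulr_ge0; lra.
have h2 : (y * (1 - x / 2)) ^+ 2 <= 1.
  by rewrite expr2; have := ler_pM yc0 yc0 hy hy; rewrite mulr1.
rewrite exprMn in h2.
set c := (1 - x / 2) in c0 key h2 *.
set P := 1 + x + 2 * x ^+ 2 in key *.
have c20 : 0 < c ^+ 2 by apply: exprn_gt0.
rewrite -(ler_pM2r c20); lra.
Qed.

Lemma ln_ge_of (a x : R) : 0 < x -> expR a <= x -> a <= ln x.
Proof.
move=> x0 h; rewrite -[a]expRK ler_ln ?posrE ?expR_gt0 //.
Qed.

Lemma expR_half_le2 : expR (1 / 2 : R) <= 2.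
Proof.
have h := expR_ge1Dx (- (1 / 2) : R).
rewrite expRN in h.
have y0 : 0 < expR (1 / 2 : R) := expR_gt0 _.
have : expR (1 / 2 : R) * (1 + - (1 / 2)) <= 1.
  by rewrite [X in X <= _]mulrC -ler_pdivlMr // div1r; move: h; rewrite !div1r.
nra.
Qed.

Lemma ln_ge_half (x : R) : 2 <= x -> 1 / 2 <= ln x.
Proof.
move=> x2; apply: ln_ge_of; first lra.
exact: le_trans expR_half_le2 x2.
Qed.

Lemma ln_ge_one (x : R) : 4 <= x -> 1 <= ln x.
Proof.
move=> x4; apply: ln_ge_of; first lra.
have -> : (1 : R) = 1 / 2 + 1 / 2 by field.
rewrite expRD; have := expR_half_le2; have := expR_gt0 (1 / 2 : R).
nra.
Qed.

End Elem.

Section Hoeff.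
Variable R : realType.

Lemma fin_hoeffding (n M : nat) (p a : 'I_M -> R) (C t : R)
  (Bad : pred {ffun 'I_n -> 'I_M}) :
  (0 < n)%N -> 0 < C -> 0 < t ->
  (forall k, 0 <= p k) -> \sum_k p k = 1 ->
  (forall k, 0 <= a k <= C) ->
  (forall v, Bad v -> n%:R * t <= \sum_j (\sum_k p k * a k - a (v j))) ->
  \sum_(v | Bad v) \prod_j p (v j) <= expR (- (n%:R * t ^+ 2 / (2 * C ^+ 2))).
Proof.
move=> n0 C0 t0 p0 p1 aC hBad.
set m := \sum_k p k * a k in hBad.
have m0 : 0 <= m by apply: sumr_ge0 => k _; apply: mulr_ge0 => //; case/andP: (aC k).
have mC : m <= C.
  rewrite -[C]mul1r -p1 mulr_suml; apply: ler_sum => k _.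
  by apply: ler_wpM2l => //; case/andP: (aC k).
have n0R : (0 : R) < n%:R by rewrite ltr0n.
case: (leP t C) => tC; last first.
  rewrite big1 ?expR_ge0 // => v Bv; exfalso.
  have := hBad v Bv.
  have : \sum_j (m - a (v j)) <= \sum_(j < n) m.
    by apply: ler_sum => j _; case/andP: (aC (v j)) => ? ?; lra.
  rewrite sumr_const card_ord -mulr_natl => h1 h2.
  have : n%:R * m < n%:R * t by rewrite ltr_pM2l //; lra.
  lra.
set l := t / C ^+ 2.
have l0 : 0 <= l by apply: divr_ge0; [lra | exact: sqr_ge0].
have lC : l * C <= 1.
  rewrite /l expr2 invfM mulrA -mulrA mulVf ?mulr1; last by rewrite gt_eqF.
  by rewrite ler_pdivrMr // mul1r.
pose F (k : 'I_M) := p k * expR (l * (m - a k)).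
have step1 : \sum_(v | Bad v) \prod_j p (v j) <=
    \sum_(v : {ffun 'I_n -> 'I_M}) (\prod_j F (v j)) * expR (- (l * (n%:R * t))).
  apply: (@le_trans _ _ (\sum_(v | Bad v) (\prod_j F (v j)) * expR (- (l * (n%:R * t))))).
    apply: ler_sum => v Bv.
    rewrite /F big_split /= -expR_sum -mulrA -expRD.
    rewrite -[X in X <= _]mulr1; apply: ler_wpM2l.
      by apply: prodr_ge0 => j _; apply: p0.
    rewrite -[X in X <= _]expR0 ler_expR -mulr_sumr -mulrN -mulrDr.
    apply: mulr_ge0 => //; have := hBad v Bv; lra.
  rewrite [X in _ <= X](bigID Bad) /= lerDl; apply: sumr_ge0 => v _.
  apply: mulr_ge0; last exact: expR_ge0.
  by apply: prodr_ge0 => j _; apply: mulr_ge0; [apply: p0 | apply: expR_ge0].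
apply: le_trans step1 _.
rewrite -mulr_suml -(bigA_distr_bigA (fun (j : 'I_n) k => F k)) /=.
rewrite prodr_const card_ord.
set c := \sum_k F k.
have c0 : 0 <= c by apply: sumr_ge0 => k _; apply: mulr_ge0; [apply: p0 | apply: expR_ge0].
have cle : c <= 1 + l ^+ 2 * C ^+ 2 / 2.
  pose al := 1 + l * m + 2 * l ^+ 2 * m ^+ 2.
  pose be := - l + 2 * l ^+ 2 * (C - 2 * m).
  apply: (@le_trans _ _ (\sum_k (p k * al + p k * a k * be))).
    apply: ler_sum => k _; rewrite /F.
    case/andP: (aC k) => a0 a1.
    have hx : l * (m - a k) <= 1.
      have : l * (m - a k) <= l * C by apply: ler_wpM2l => //; lra.
      lra.
    apply: (@le_trans _ _ (p k * (1 + l * (m - a k) + 2 * (l * (m - a k)) ^+ 2))).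
      by apply: ler_wpM2l => //; apply: exp_quad.
    rewrite -mulrA -mulrDr; apply: ler_wpM2l => //.
    rewrite /al /be.
    have : 0 <= 2 * l ^+ 2 * (a k * (C - a k)).
      apply: mulr_ge0; first by apply: mulr_ge0 => //; exact: sqr_ge0.
      by apply: mulr_ge0; lra.
    move=> h; rewrite -subr_ge0; apply: le_trans h _.
    rewrite le_eqVlt; apply/orP; left; apply/eqP; ring.
  rewrite big_split /= -mulr_suml p1 mul1r -mulr_suml.
  rewrite /al /be -/m.
  have : 0 <= (C - 2 * m) ^+ 2 by exact: sqr_ge0.
  have : 0 <= l ^+ 2 by exact: sqr_ge0.
  nra.
apply: (@le_trans _ _ (expR (l ^+ 2 * C ^+ 2 / 2) ^+ n * expR (- (l * (n%:R * t))))).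
  apply: ler_wpM2r; first exact: expR_ge0.
  apply: lerXn2r; rewrite ?nnegrE ?expR_ge0 //.
  apply: le_trans cle _.
  by have := expR_ge1Dx (l ^+ 2 * C ^+ 2 / 2); lra.
rewrite -expRM_natl -expRD ler_expR.
rewrite le_eqVlt; apply/orP; left; apply/eqP.
rewrite /l; field; by rewrite gt_eqF.
Qed.

End Hoeff.

Local Open Scope classical_set_scope.
Local Open Scope ring_scope.

Lemma fsum_fin (R : realType) (I : finType) (D : set I) (f : I -> \bar R) :
  (\sum_(i \in D) f i = \sum_(i | `[< D i >]) f i)%E.
Proof.
rewrite (fsbigE [seq i <- enum I | `[< D i >]]).
- rewrite big_filter_cond big_enum_cond /=; apply: eq_bigl => i.
  by case: asboolP => //= h; rewrite mem_set.
- by rewrite filter_uniq ?enum_uniq.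
- by move=> i /=; rewrite mem_filter => /andP[/asboolP].
- by move=> i Di; rewrite mem_filter mem_enum andbT; move/asboolP: Di => ->.
Qed.

Section Disc.
Context (R : realType) (d : measure_display) (T : measurableType d)
  (P : probability T R) (loss : T -> R) (C eps : R).
Hypotheses (mloss : measurable_fun setT loss)
  (lossC : forall x, 0 <= loss x <= C) (C0 : 0 < C) (eps0 : 0 < eps).

Ltac lra' := move: (C0) (eps0) => ? ?; lra.

Let N := Num.Def.trunc (C / eps).
Let lev (x : T) : 'I_N.+1 := inord (Num.Def.trunc (loss x / eps)).
Let a (k : 'I_N.+1) : R := k%:R * eps.
Let A (k : 'I_N.+1) : set T := [set x | lev x = k].

Lemma levE x : (lev x : nat) = Num.Def.trunc (loss x / eps).
Proof.
rewrite /lev inordK // ltnS /N; apply: le_truncn.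
by rewrite ler_pM2r ?invr_gt0 //; case/andP: (lossC x).
Qed.

Lemma aC k : 0 <= a k <= C.
Proof.
rewrite /a; apply/andP; split; first by apply: mulr_ge0 => //; apply: ltW.
rewrite -ler_pdivlMr //.
apply: le_trans (_ : N%:R <= _); first by rewrite ler_nat -ltnS.
rewrite /N truncn_le; apply: divr_ge0; lra'.
Qed.

Lemma alev x : a (lev x) <= loss x < a (lev x) + eps.
Proof.
have h0 : 0 <= loss x / eps by apply: divr_ge0; [case/andP: (lossC x) | lra'].
have := truncn_itv h0; rewrite /a levE => /andP[h1 h2].
apply/andP; split; first by rewrite -ler_pdivlMr.
rewrite -[X in _ < _ + X]mul1r -mulrDl natr1 -ltr_pdivrMr //.
Qed.

Lemma mA k : measurable (A k).
Proof.
have -> : A k = loss @^-1` [set` `[a k, a k + eps[%R].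
  apply/seteqP; split => x /=.
    by move=> <-; rewrite in_itv /=; apply: alev.
  rewrite in_itv /= => /andP[h1 h2]; apply: val_inj => /=.
  rewrite levE; apply/eqP; rewrite truncn_eq; last first.
    by apply: divr_ge0; [case/andP: (lossC x) | lra'].
  apply/andP; split; first by rewrite ler_pdivlMr.
  rewrite ltr_pdivrMr // -natr1 mulrDl mul1r; exact: h2.
by have := mloss measurableT _ (measurable_itv `[a k, a k + eps[%R); rewrite setTI.
Qed.

Let p k := fine (P (A k)).

Lemma PAE k : P (A k) = (p k)%:E.
Proof.
rewrite /p fineK // ge0_fin_numE ?measure_ge0 //.
by apply: (le_lt_trans (probability_le1 P (mA k))); rewrite ltry.
Qed.

Lemma p0 k : 0 <= p k.
Proof. by rewrite /p fine_ge0 ?measure_ge0. Qed.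

Lemma psum : \sum_k p k = 1.
Proof.
have U : \bigcup_(k in [set: 'I_N.+1]) A k = setT.
  by apply/seteqP; split => x // _; exists (lev x).
have h := @measure_fin_bigcup _ _ _ P _ [set: 'I_N.+1] A finite_finset.
have tA : trivIset [set: 'I_N.+1] A by move=> i j _ _ [x [/= <- <-]].
have {}h := h tA (fun k _ => mA k).
rewrite U in h.
have h1 : (1 = \sum_(i \in [set: 'I_N.+1]) P (A i))%E.
  by rewrite -(probability_setT P); exact: h.
move: h1; rewrite fsum_fin.
rewrite (eq_bigl xpredT); last by move=> i; apply/asboolP.
under eq_bigr do rewrite PAE.
rewrite sumEFin.
by case.
Qed.

Let m := \sum_k p k * a k.

Lemma int_le : (\int[P]_x (loss x)%:E <= (m + eps)%:E)%E.
Proof.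
pose g x := \sum_k (a k + eps) * \1_(A k) x.
have gE x : g x = a (lev x) + eps.
  rewrite /g (bigD1 (lev x)) //= big1 ?addr0.
    by rewrite indicE mem_set // mulr1.
  move=> k /negPf nk; rewrite indicE memNset ?mulr0 //= => h.
  by rewrite h eqxx in nk.
have mg : measurable_fun setT g.
  apply: measurable_sum => k; apply: measurable_realfun.measurable_funM; first exact: measurable_cst.
  exact: measurable_realfun.measurable_indic (mA k).
apply: (@le_trans _ _ (\int[P]_x (g x)%:E)%E).
  apply: ge0_le_integral => //.
  - by move=> x _; rewrite lee_fin; case/andP: (lossC x).
  - exact/measurable_realfun.measurable_EFinP.
  - exact/measurable_realfun.measurable_EFinP.
  - by move=> x _; rewrite lee_fin gE; case/andP: (alev x) => _ /ltW.
have -> : (\int[P]_x (g x)%:E =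
    \int[P]_x (\sum_(k <- index_enum 'I_N.+1) ((a k + eps) * \1_(A k) x)%:E))%E.
  by apply: eq_integral => x _; rewrite /g sumEFin.
rewrite ge0_integral_sum //; last first.
  move=> k x _; rewrite lee_fin; apply: mulr_ge0; last by rewrite indicE.
  by case/andP: (aC k) => ? _; move: (eps0) => ?; lra.
  move=> k; apply/measurable_realfun.measurable_EFinP; apply: measurable_realfun.measurable_funM; first exact: measurable_cst.
  exact: measurable_realfun.measurable_indic (mA k).
rewrite (eq_bigr (fun k => ((a k + eps) * p k)%:E)%E); last first.
  move=> k _; under eq_integral do rewrite EFinM.
  rewrite ge0_integralZl_EFin //.
  all: try (by move=> x _; rewrite lee_fin indicE).
  all: try (by apply/measurable_realfun.measurable_EFinP; exact: measurable_realfun.measurable_indic (mA k)).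
  rewrite integral_indic //; last exact: mA.
  by rewrite setIT EFinM; congr (_ * _)%E; exact: PAE.
  by case/andP: (aC k) => ? _; move: (eps0) => ?; lra.
rewrite sumEFin lee_fin le_eqVlt; apply/orP; left; apply/eqP.
under eq_bigr do rewrite mulrDl.
rewrite big_split /= -mulr_sumr psum mulr1 /m; congr (_ + _).
by apply: eq_bigr => k _; rewrite mulrC.
Qed.

Lemma disc_hoeffding (d' : measure_display) (Omega : measurableType d')
  (Q : probability Omega R) (n : nat) (Z : 'I_n -> Omega -> T) (t : R) :
  (0 < n)%N -> 0 < t -> (forall j, measurable_fun setT (Z j)) ->
  (forall A : 'I_n -> set T, (forall j, measurable (A j)) ->
     Q (\bigcap_(j in [set: 'I_n]) (Z j @^-1` A j)) = (\prod_(j < n) P (A j))%E) ->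
  exists m : R, (\int[P]_x (loss x)%:E <= (m + eps)%:E)%E /\
    exists B : set Omega, measurable B /\
      (forall w, n%:R * t <= \sum_j (m - loss (Z j w)) -> B w) /\
      (Q B <= (expR (- (n%:R * t ^+ 2 / (2 * C ^+ 2))))%:E)%E.
Proof.
move=> n0 t0 mZ hind.
exists m; split; first exact: int_le.
pose Bad := [pred v : {ffun 'I_n -> 'I_N.+1} | n%:R * t <= \sum_j (m - a (v j))].
pose E v := \bigcap_(j in [set: 'I_n]) (Z j @^-1` A (v j)).
have mE v : measurable (E v).
  apply: fin_bigcap_measurable; first exact: finite_finset.
  by move=> j _; have := mZ j measurableT _ (mA (v j)); rewrite setTI.
exists (\bigcup_(v in [set v | Bad v]) E v); split.
  by apply: fin_bigcup_measurable; [exact: finite_finset | move=> v _; apply: mE].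
split.
  move=> w hw; exists [ffun j => lev (Z j w)].
    rewrite /=; apply: le_trans hw _; apply: ler_sum => j _.
    by rewrite ffunE lerD2l lerN2; case/andP: (alev (Z j w)).
  by move=> j _ /=; rewrite ffunE.
have tE : trivIset [set v | Bad v] E.
  move=> v v' _ _ [w [Ew Ew']]; apply/ffunP => j.
  by have := Ew j Logic.I; have := Ew' j Logic.I; rewrite /= => <- <-.
rewrite measure_fin_bigcup //.
all: try exact: finite_finset.
all: try (by move=> v _; apply: mE).
rewrite fsum_fin.
rewrite (eq_bigl Bad); last by move=> v; rewrite asboolb.
rewrite (eq_bigr (fun v : {ffun 'I_n -> 'I_N.+1} => (\prod_j p (v j))%:E)); last first.
  move=> v _; rewrite /E.
  transitivity (\prod_j P (A (v j)))%E.
    exact: (hind (fun j => A (v j)) (fun j => mA (v j))).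
  rewrite -prodEFin; apply: eq_bigr => j _; exact: PAE.
rewrite sumEFin lee_fin.
apply: fin_hoeffding => //.
- exact: p0.
- exact: psum.
- exact: aC.
- by move=> v.
Qed.

End Disc.

Lemma meas_factor (R : realType) (d' : measure_display) (Omega : measurableType d')
  (K : finType) (key : Omega -> K) (Phi : Omega -> R) :
  (forall k, measurable (key @^-1` [set k])) ->
  (forall w w', key w = key w' -> Phi w = Phi w') ->
  measurable_fun setT Phi.
Proof.
move=> mk hP _ Y mY; rewrite setTI.
have -> : Phi @^-1` Y =
    \bigcup_(k in [set k | exists w, key w = k /\ Y (Phi w)]) key @^-1` [set k].
  apply/seteqP; split => w /=.
    by move=> Yw; exists (key w) => //; exists w.
  by move=> [k [w0 [<- Yw0]] /= kw]; rewrite (hP w w0).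
by apply: fin_bigcup_measurable; [exact: finite_finset | move=> k _; apply: mk].
Qed.

Lemma meas_key (d : measure_display) (T : measurableType d)
  (d' : measure_display) (Omega : measurableType d') (n K : nat)
  (Z : 'I_n -> Omega -> T) (Zs : 'I_K -> set T) :
  (forall j, measurable_fun setT (Z j)) -> (forall i, measurable (Zs i)) ->
  forall k : {ffun 'I_n -> {ffun 'I_K -> bool}},
  measurable ((fun w => [ffun j => [ffun i => Z j w \in Zs i]]) @^-1` [set k]).
Proof.
move=> mZ mZs k.
pose S j i := if k j i then Z j @^-1` Zs i else ~` (Z j @^-1` Zs i).
have mS j i : measurable (S j i).
  have h : measurable (Z j @^-1` Zs i).
    by have := mZ j measurableT _ (mZs i); rewrite setTI.
  by rewrite /S; case: (k j i) => //; apply: measurableC.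
have -> : (fun w => [ffun j => [ffun i => Z j w \in Zs i]]) @^-1` [set k] =
    \bigcap_(j in [set: 'I_n]) \bigcap_(i in [set: 'I_K]) S j i.
  apply/seteqP; split => w /=.
    move=> hk j _ i _; rewrite /S -hk !ffunE.
    by case: (boolP (Z j w \in Zs i)) => h /=; [apply/set_mem | move/negP: h => h /mem_set].
  move=> h; apply/ffunP => j; apply/ffunP => i; rewrite !ffunE.
  have := h j Logic.I i Logic.I; rewrite /S.
  case: (k j i) => /= hw; first exact: mem_set.
  by apply/negP => /set_mem.
apply: fin_bigcap_measurable; first exact: finite_finset.
move=> j _; apply: fin_bigcap_measurable; first exact: finite_finset.
by move=> i _; apply: mS.
Qed.

Theorem theorem1 (R : realType) (d : measure_display) (T : measurableType d)
  (P : probability T R)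
  (loss : T -> R) (C : R)
  (d' : measure_display) (Omega : measurableType d') (Q : probability Omega R)
  (n K : nat) (Z : 'I_n -> Omega -> T) (Zs : 'I_K -> set T)
  (gamma delta alpha : R) :
  measurable_fun setT loss ->
  (forall z, 0 <= loss z) ->
  has_ubound (range loss) ->
  C = sup (range loss) ->
  (0 < n)%N ->
  (forall j, measurable_fun setT (Z j)) ->
  (* z_1, ..., z_n are i.i.d. with law P *)
  (forall A : 'I_n -> set T, (forall j, measurable (A j)) ->
     Q (\bigcap_(j in [set: 'I_n]) (Z j @^-1` A j)) = (\prod_(j < n) P (A j))%E) ->
  (* Gamma = (Z_1, ..., Z_K) is a partition of the instance set into
     disjoint nonempty measurable sets *)
  (forall i, measurable (Zs i)) ->
  (forall i, Zs i !=set0) ->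
  (forall i j, i != j -> Zs i `&` Zs j = set0) ->
  \bigcup_(i in [set: 'I_K]) Zs i = setT ->
  1 <= gamma -> 0 < delta ->
  0 <= alpha ->
  alpha <= gamma * n%:R * (K%:R + gamma * n%:R) / (K%:R * (4 * n%:R - 3)) ->
  ((1 - gamma `^ (- alpha) - delta)%:E <=
   Q [set w | (\int[P]_z (loss z)%:E <=
      (emp_loss loss (fun j => Z j w)
       + C * Num.sqrt (uhat gamma delta Zs (fun j => Z j w) * alpha * ln gamma)
       + gfun C n K (num_hit Zs (fun j => Z j w)) (delta / 2))%:E)%E])%E.
Proof.
move=> mloss loss0 ubl hC n0 mZ hind mZs ne disj cover g1 d0 a0 aub.
have [x0 _] : exists x : T, True.
  case: (pselect (exists x : T, True)) => // nT; exfalso.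
  have eT : [set: T] = set0 by apply/seteqP; split => x // _; apply: nT; exists x.
  have := probability_setT P; rewrite eT measure0 => /esym/eqP.
  by rewrite onee_eq0.
have lossC x : loss x <= C by rewrite hC; apply: (ub_le_sup ubl); exists x.
have C0 : 0 <= C := le_trans (loss0 x0) (lossC x0).
have K0 : (0 < K)%N.
  have : [set: T] x0 by [].
  by rewrite -cover => -[i _ _]; case: i => i ilt; apply: leq_ltn_trans ilt.
have pg0 : 0 <= gamma `^ (- alpha) := powR_ge0 _ _.
case: (leP 1 delta) => d1.
  apply: (@le_trans _ _ 0%E); last exact: measure_ge0.
  by rewrite lee_fin; lra.
have K1 : (1 : R) <= K%:R by rewrite ler1n.
set L' := ln (2 * K%:R / (delta / 2)).
have L'1 : 1 <= L'.
  apply: ln_ge_one; rewrite ler_pdivlMr; last lra.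
  lra.
set L := ln (2 * K%:R / delta).
have L1 : 1 / 2 <= L.
  apply: ln_ge_half; rewrite ler_pdivlMr //; lra.
have n0R : (0 : R) < n%:R by rewrite ltr0n.
set g0 := 2 * C * L' / n%:R.
have hit w : (1 <= num_hit Zs (fun j => Z j w))%N.
  have : [set: T] (Z (Ordinal n0) w) by [].
  rewrite -cover => -[i _ Zi].
  apply/card_gt0P; exists i; rewrite inE.
  apply/card_gt0P; exists (Ordinal n0); rewrite inE.
  exact: mem_set.
have gge w : g0 <= gfun C n K (num_hit Zs (fun j => Z j w)) (delta / 2).
  rewrite /gfun -/L' /g0.
  set tt := (num_hit Zs (fun j => Z j w))%:R.
  have tt1 : (1 : R) <= tt by rewrite ler1n; apply: hit.
  have h1 : 0 <= C * (Num.sqrt 2 + 1) * Num.sqrt (tt * L' / n%:R).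
    apply: mulr_ge0; last exact: sqrtr_ge0.
    by apply: mulr_ge0 => //; apply: addr_ge0 => //; exact: sqrtr_ge0.
  have h2 : 2 * C * L' / n%:R <= 2 * C * tt * L' / n%:R.
    apply: ler_wpM2r; first by rewrite invr_ge0; lra.
    have : 0 <= C * L' by apply: mulr_ge0 => //; lra.
    nra.
  lra.
have RHSge w : g0 <= emp_loss loss (fun j => Z j w)
       + C * Num.sqrt (uhat gamma delta Zs (fun j => Z j w) * alpha * ln gamma)
       + gfun C n K (num_hit Zs (fun j => Z j w)) (delta / 2).
  have e0 : 0 <= emp_loss loss (fun j => Z j w).
    rewrite /emp_loss; apply: mulr_ge0; first by rewrite invr_ge0; lra.
    by apply: sumr_ge0 => j _; apply: loss0.
  have s0 : 0 <= C * Num.sqrt (uhat gamma delta Zs (fun j => Z j w) * alpha * ln gamma).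
    by apply: mulr_ge0 => //; exact: sqrtr_ge0.
  have := gge w; lra.
have muC : (\int[P]_x (loss x)%:E <= C%:E)%E.
  apply: (@le_trans _ _ (\int[P]_x (cst C%:E) x)%E).
    apply: ge0_le_integral => //.
    - by move=> x _; rewrite lee_fin.
    - exact/measurable_realfun.measurable_EFinP.
    - by move=> x _; rewrite lee_fin.
  rewrite integral_cst //.
  rewrite [X in (_ * X <= _)%E](_ : _ = 1%E); first by rewrite mule1.
  exact: probability_setT.
have trivc : C <= g0 -> ((1 - gamma `^ (- alpha) - delta)%:E <=
   Q [set w | (\int[P]_z (loss z)%:E <=
      (emp_loss loss (fun j => Z j w)
       + C * Num.sqrt (uhat gamma delta Zs (fun j => Z j w) * alpha * ln gamma)
       + gfun C n K (num_hit Zs (fun j => Z j w)) (delta / 2))%:E)%E])%E.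
  move=> Cg.
  rewrite [X in (_ <= X)%E](_ : _ = 1%E); first by rewrite lee_fin; lra.
  transitivity (Q [set: Omega]); last exact: probability_setT.
  congr (Q _); apply/seteqP; split => w // _ /=.
  by apply: le_trans muC _; rewrite lee_fin; have := RHSge w; lra.
have [Cz|Cp] : C = 0 \/ 0 < C.
  by move: C0; rewrite le_eqVlt => /orP[/eqP <-|]; [left|right].
  by apply: trivc; rewrite /g0 Cz mulr0 !mul0r.
case: (leqP n 2) => n2.
  apply: trivc; rewrite /g0 ler_pdivlMr //.
  have n2R : n%:R <= 2 :> R by rewrite (ler_nat R n 2).
  nra.
have n3 : (3 : R) <= n%:R by rewrite (ler_nat R 3 n).
have lg0 : 0 <= ln gamma := ln_ge0 g1.
set s := alpha * ln gamma.
have s0 : 0 <= s by apply: mulr_ge0.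
have powE : gamma `^ (- alpha) = expR (- s).
  by rewrite /powR gt_eqF ?mulNr //; lra.
case: (eqVneq s 0) => [sz|snz].
  apply: (@le_trans _ _ 0%E); last exact: measure_ge0.
  by rewrite lee_fin powE sz oppr0 expR0; lra.
have sp : 0 < s by rewrite lt_neqAle eq_sym snz s0.
set u0 := 1 / (2 * n%:R) + Num.sqrt (2 / n%:R * L).
have u00 : 0 < u0.
  have := sqrtr_ge0 (2 / n%:R * L).
  have : 0 < 1 / (2 * n%:R) :> R by rewrite div1r invr_gt0; lra.
  rewrite /u0; lra.
set t1 := C * Num.sqrt (u0 * alpha * ln gamma).
have t10 : 0 < t1.
  apply: mulr_gt0 => //; rewrite sqrtr_gt0 -mulrA.
  exact: mulr_gt0.
have g00 : 0 < g0.
  by rewrite /g0; apply: divr_gt0 => //; apply: mulr_gt0; [apply: mulr_gt0|]; lra.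
have lossC' x : 0 <= loss x <= C by rewrite loss0 lossC.
have [m [hm [B [mB [covB QB]]]]] :=
  @disc_hoeffding R d T P loss C g0 mloss lossC' Cp g00 d' Omega Q n Z t1 n0 t10 mZ hind.
pose Phi2 w := C * Num.sqrt (uhat gamma delta Zs (fun j => Z j w) * alpha * ln gamma)
       + gfun C n K (num_hit Zs (fun j => Z j w)) (delta / 2).
pose Phi w := emp_loss loss (fun j => Z j w) + Phi2 w.
have mPhi : measurable_fun setT Phi.
  apply: measurable_realfun.measurable_funD.
    rewrite /emp_loss; apply: measurable_realfun.measurable_funM.
      exact: measurable_cst.
    apply: measurable_sum => j; exact: measurableT_comp mloss (mZ j).
  apply: (@meas_factor R d' Omega _ (fun w => [ffun j => [ffun i => Z j w \in Zs i]])).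
    exact: meas_key.
  move=> w w' hk.
  have hcc i : cell_count Zs (fun j => Z j w) i = cell_count Zs (fun j => Z j w') i.
    have e : (fun j0 : 'I_n => is_true (Z j0 w \in Zs i)) =
             (fun j0 : 'I_n => is_true (Z j0 w' \in Zs i)).
      apply: funext => j; congr is_true; have := congr1 (fun f : {ffun 'I_n -> {ffun 'I_K -> bool}} => f j i) hk; by rewrite /= !ffunE => ->.
    by rewrite /cell_count e.
  have hu : uhat gamma delta Zs (fun j => Z j w) = uhat gamma delta Zs (fun j => Z j w').
    by rewrite /uhat; congr (_ + _ * _ + _); apply: eq_bigr => i _; rewrite hcc.
  have hn : num_hit Zs (fun j => Z j w) = num_hit Zs (fun j => Z j w').
    have e2 : (fun i : 'I_K => is_true (0 < cell_count Zs (fun j => Z j w) i)%N) =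
              (fun i : 'I_K => is_true (0 < cell_count Zs (fun j => Z j w') i)%N).
      by apply: funext => i; rewrite hcc.
    by rewrite /num_hit e2.
  by rewrite /Phi2 hu hn.
set G := (X in (_ <= Q X)%E).
have GE : G = (EFin \o Phi) @^-1` [set` `[(\int[P]_x (loss x)%:E)%E, +oo[%O].
  apply/seteqP; split => w /=; rewrite in_itv /= andbT /Phi /Phi2 addrA //.
have mG : measurable G.
  have := (measurable_realfun.measurable_EFinP _ _).2 mPhi measurableT _
    (measurable_realfun.emeasurable_itv `[(\int[P]_x (loss x)%:E)%E, +oo[%O).
  by rewrite setTI -GE.
have uh w : u0 <= uhat gamma delta Zs (fun j => Z j w).
  rewrite /uhat /u0 -/L.
  have sq0 := sqrtr_ge0 (2 / n%:R * L).
  have gg : 1 <= gamma ^+ 2 by rewrite expr2; nra.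
  have h1 : 1 / (2 * n%:R) <= gamma / (2 * n%:R).
    by apply: ler_wpM2r => //; rewrite invr_ge0; lra.
  have h2 : 0 <= gamma ^+ 2 / 2 *
      \sum_(i < K) ((cell_count Zs (fun j => Z j w) i)%:R / n%:R) ^+ 2.
    apply: mulr_ge0; first by apply: divr_ge0; [exact: sqr_ge0 | lra].
    by apply: sumr_ge0 => i _; exact: sqr_ge0.
  have h3 : Num.sqrt (2 / n%:R * L) <= gamma ^+ 2 * Num.sqrt (2 / n%:R * L) by nra.
  lra.
have sub : ~` G `<=` B.
  move=> w /= nGw.
  have hlt : Phi w < m + g0.
    have : ((Phi w)%:E < (m + g0)%:E)%E.
      apply: lt_le_trans hm; rewrite ltNge; apply/negP => h; apply: nGw.
      by move: h; rewrite /Phi /Phi2 addrA.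
    by rewrite lte_fin.
  apply: covB.
  have e1 : \sum_j (m - loss (Z j w)) =
      n%:R * m - n%:R * emp_loss loss (fun j => Z j w).
    rewrite sumrB sumr_const card_ord /emp_loss mulrA mulfV ?mul1r ?mulr_natl //.
    by rewrite gt_eqF.
  rewrite e1.
  have hs : t1 <= C * Num.sqrt (uhat gamma delta Zs (fun j => Z j w) * alpha * ln gamma).
    apply: ler_wpM2l => //; rewrite ler_sqrt; last first.
      apply: mulr_ge0 => //; apply: mulr_ge0 => //; exact: le_trans (ltW u00) (uh w).
    by apply: ler_wpM2r => //; apply: ler_wpM2r => //; exact: uh.
  have := gge w.
  move: hlt; rewrite /Phi /Phi2 => hlt hg.
  have : emp_loss loss (fun j => Z j w) + t1 <= m by lra.
  move=> h; have := ler_wpM2l (ltW n0R) h; lra.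
have QGc : (Q (~` G) <= Q B)%E.
  apply: le_measure; rewrite ?inE //; exact: measurableC.
have nu : 2 <= n%:R * u0.
  have h30 : 0 <= 3 / (2 * n%:R) :> R by apply: divr_ge0; lra.
  have hq : 3 / (2 * n%:R) <= Num.sqrt (2 / n%:R * L).
    rewrite -(ger0_norm h30) -sqrtr_sqr ler_sqrt; last first.
      by apply: mulr_ge0; [apply: divr_ge0|]; lra.
    have -> : 2 / n%:R * L = (3 / (2 * n%:R)) ^+ 2 + (8 * L * n%:R - 9) / (4 * n%:R ^+ 2).
      by field; rewrite gt_eqF.
    rewrite lerDl; apply: divr_ge0; first nra.
    by apply: mulr_ge0; [lra | exact: sqr_ge0].
  rewrite /u0 mulrDr.
  have -> : n%:R * (1 / (2 * n%:R)) = 1 / 2 :> R by field; rewrite gt_eqF.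
  have e3 : n%:R * (3 / (2 * n%:R)) = 3 / 2 :> R by field; rewrite gt_eqF.
  have := ler_wpM2l (ltW n0R) hq; lra.
have Qle : (Q (~` G) <= (expR (- s))%:E)%E.
  apply: le_trans QGc (le_trans QB _); rewrite lee_fin ler_expR lerN2.
  have t1sq : t1 ^+ 2 = C ^+ 2 * (u0 * s).
    rewrite /t1 exprMn sqr_sqrtr; first by rewrite /s !mulrA.
    by rewrite -mulrA; apply: mulr_ge0; [apply: ltW | exact: s0].
  rewrite t1sq.
  have -> : n%:R * (C ^+ 2 * (u0 * s)) / (2 * C ^+ 2) = n%:R * u0 * s / 2.
    by field; rewrite gt_eqF.
  rewrite ler_pdivlMr //; nra.
have hCG : (Q (~` G) = 1 - Q G)%E by exact: probability_setC.
have QGE : Q G = (fine (Q G))%:E.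
  rewrite fineK // ge0_fin_numE ?measure_ge0 //.
  by apply: le_lt_trans (probability_le1 Q mG) _; rewrite ltry.
move: Qle; rewrite hCG QGE -EFinB lee_fin => Qle'.
by rewrite lee_fin powE; lra.
Qed.
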